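(* Let $M$ be a matroid on a finite set $E$, let $\mathcal{C}$ be a family of non-spanning circuits of $M$, and let $N$ be the free elevation of $M$. Suppose every cyclic flat of $M$ is a union of circuits in $\mathcal{C}$. Then every cyclic flat of $N$ is a union of circuits in $\mathcal{C}$.
   Context: A cyclic set is a union of circuits; $\emptyset$ counts as cyclic. $M$ is the truncation of $N$ if $r_N(E)=r_M(E)+1$ and $r_M(X)=\min\{r_N(X),r_M(E)\}$ for all $X$. The free erection of $M$ is the maximum, in the weak order, of the set consisting of $M$ and all $N$ whose truncation is $M$. The free elevation of $M$ is obtained by repeatedly taking non-trivial free erections until a matroid with no non-trivial erection is reached. *)

(* Defs.v *)
From mathcomp Require Import all_boot.
Set Implicit Arguments. Unset Strict Implicit. Unset Printing Implicit Defensive.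

Definition rankfun (E : finType) := {ffun {set E} -> nat}.

Definition is_matroid (E : finType) (r : rankfun E) : Prop :=
  [/\ forall X : {set E}, r X <= #|X|,
      forall X Y : {set E}, X \subset Y -> r X <= r Y
    & forall X Y : {set E}, r (X :|: Y) + r (X :&: Y) <= r X + r Y].

Definition dependent (E : finType) (r : rankfun E) (X : {set E}) : bool :=
  r X < #|X|.

Definition circuit (E : finType) (r : rankfun E) (C : {set E}) : bool :=
  dependent r C && [forall D : {set E}, (D \proper C) ==> ~~ dependent r D].

Definition flat (E : finType) (r : rankfun E) (F : {set E}) : bool :=
  [forall e : E, (e \notin F) ==> (r F < r (e |: F))].

(* cyclic set = union of circuits (the empty union gives the empty set) *)
Definition union_of (E : finType) (Cs : {set {set E}}) (X : {set E}) : Prop :=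
  exists D : {set {set E}}, D \subset Cs /\ X = \bigcup_(C in D) C.

Definition cyclic (E : finType) (r : rankfun E) (X : {set E}) : Prop :=
  union_of [set C | circuit r C] X.

Definition cyclic_flat (E : finType) (r : rankfun E) (F : {set E}) : Prop :=
  flat r F /\ cyclic r F.

Definition is_truncation (E : finType) (M N : rankfun E) : Prop :=
  N [set: E] = (M [set: E]).+1 /\
  forall X : {set E}, M X = minn (N X) (M [set: E]).

(* weak order: M <= N iff r_M(X) <= r_N(X) for all X
   (every independent set of M is independent in N) *)
Definition weak_le (E : finType) (M N : rankfun E) : Prop :=
  forall X : {set E}, M X <= N X.

Definition is_erection (E : finType) (M N : rankfun E) : Prop :=
  is_matroid N /\ (N = M \/ is_truncation M N).

Definition nontrivial_erection (E : finType) (M N : rankfun E) : Prop :=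
  is_matroid N /\ is_truncation M N.

Definition is_free_erection (E : finType) (M N : rankfun E) : Prop :=
  is_erection M N /\ forall N', is_erection M N' -> weak_le N' N.

Inductive free_elevation (E : finType) : rankfun E -> rankfun E -> Prop :=
  | fe_stop (M : rankfun E) :
      (forall N, ~ nontrivial_erection M N) -> free_elevation M M
  | fe_step (M M' N : rankfun E) :
      is_free_erection M M' -> M' <> M -> free_elevation M' N ->
      free_elevation M N.

(* Main.v *)
Require Import Defs.
From mathcomp Require Import all_boot.
From mathcomp Require Import zify.
Set Implicit Arguments. Unset Strict Implicit. Unset Printing Implicit Defensive.

Lemma m_bound E (r : rankfun E) : is_matroid r -> forall X, r X <= #|X|.
Proof. by case. Qed.
Lemma m_mono E (r : rankfun E) : is_matroid r -> forall X Y : {set E}, X \subset Y -> r X <= r Y.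
Proof. by case. Qed.
Lemma m_sub E (r : rankfun E) : is_matroid r -> forall X Y, r (X :|: Y) + r (X :&: Y) <= r X + r Y.
Proof. by case. Qed.

Lemma m_subm E (r : rankfun E) : is_matroid r -> forall X Y U I : {set E},
  U \subset X :|: Y -> I \subset X :&: Y -> r U + r I <= r X + r Y.
Proof.
move=> Hr X Y U I HU HI.
have := m_sub Hr X Y; have := m_mono Hr HU; have := m_mono Hr HI. lia.
Qed.

Lemma m_top E (r : rankfun E) : is_matroid r -> forall X, r X <= r setT.
Proof. move=> Hr X; exact: m_mono Hr _ _ (subsetT X). Qed.

Lemma m_add1 E (r : rankfun E) : is_matroid r -> forall X x, r (x |: X) <= (r X).+1.
Proof.
move=> Hr X x.
have H1 := @m_subm _ _ Hr [set x] X (x |: X) set0 (subxx _) (sub0set _).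
have := m_bound Hr [set x]; rewrite cards1.
have := m_bound Hr set0; rewrite cards0. lia.
Qed.

Lemma m_addsub E (r : rankfun E) : is_matroid r -> forall X x, r X <= r (x |: X).
Proof. move=> Hr X x; apply: m_mono Hr _ _ (subsetUr _ _). Qed.

Lemma circuit_cl E (r : rankfun E) : is_matroid r -> forall (C : {set E}) x (Y : {set E}),
  circuit r C -> x \in C -> C :\ x \subset Y -> r (x |: Y) = r Y.
Proof.
move=> Hr C x Y /andP[Hdep /forallP Hmin] xC sub.
have Hp : C :\ x \proper C by rewrite properD1.
have := implyP (Hmin (C :\ x)) Hp; rewrite /dependent -leqNgt => Hind.
have Hc : #|C| = (#|C :\ x|).+1 by rewrite (cardsD1 x C) xC.
move: Hdep; rewrite /dependent => Hdep.
have H1 := @m_subm _ _ Hr Y C (x |: Y) (C :\ x).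
have H2 := m_addsub Hr Y x.
suff [S1 S2] : x |: Y \subset Y :|: C /\ C :\ x \subset Y :&: C.
  have := H1 S1 S2. lia.
split.
  apply/subsetP => z; rewrite !inE => /orP[/eqP->|zY]; first by rewrite xC orbT.
  by rewrite zY.
by rewrite subsetI sub subsetDl.
Qed.

Lemma dep_elem E (r : rankfun E) : is_matroid r -> forall n (X : {set E}), #|X| = n ->
  r X < #|X| -> exists2 x, x \in X & r (X :\ x) = r X.
Proof.
move=> Hr; elim=> [|n IH] X hX hlt.
  by rewrite hX ltn0 in hlt.
have : X != set0 by apply/eqP => X0; rewrite X0 cards0 in hX.
case/set0Pn => x xX.
have hc : #|X| = (#|X :\ x|).+1 by rewrite (cardsD1 x X) xX.
have hm := m_mono Hr (subsetDl X [set x]).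
have ha := m_add1 Hr (X :\ x) x. rewrite setD1K // in ha.
case: (eqVneq (r (X :\ x)) (r X)) => [h|hne]; first by exists x.
have [y] := IH (X :\ x) ltac:(lia) ltac:(lia).
rewrite !inE => /andP[yx yX] hy.
exists y => //.
have H := @m_subm _ _ Hr (X :\ y) (X :\ x) X (X :\ x :\ y).
have hm2 := m_mono Hr (subsetDl X [set y]).
suff [S1 S2] : X \subset (X :\ y) :|: (X :\ x) /\ X :\ x :\ y \subset (X :\ y) :&: (X :\ x).
  have := H S1 S2. lia.
split.
  apply/subsetP=> z zX; rewrite !inE zX !andbT.
  by case: (z =P y) => [->|] //=.
apply/subsetP=> z; rewrite !inE.
by case/and3P => -> -> ->.
Qed.

Lemma indep_sub E (r : rankfun E) : is_matroid r -> forall B D : {set E},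
  #|B| <= r B -> D \subset B -> #|D| <= r D.
Proof.
move=> Hr B D hB hD.
have H := @m_subm _ _ Hr D (B :\: D) B set0.
have := m_bound Hr (B :\: D). have := cardsID D B. rewrite (setIidPr hD).
have := m_bound Hr set0; rewrite cards0.
suff S1 : B \subset D :|: (B :\: D).
  have := H S1 (sub0set _). lia.
apply/subsetP => z zB; rewrite !inE zB andbT. by case: (z \in D).
Qed.
Lemma cl_circuit E (r : rankfun E) : is_matroid r -> forall (A : {set E}) e, e \notin A ->
  r (e |: A) = r A -> exists C, [/\ circuit r C, e \in C & C \subset e |: A].
Proof.
move=> Hr A e eA hA.
pose P := fun n => [exists B : {set E}, [&& B \subset A, #|B| == n & r (e |: B) == r B]].
have exP : exists n, P n.
  exists #|A|; apply/existsP; exists A; by rewrite subxx eqxx hA eqxx.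
case: (ex_minnP exP) => m /existsP[B /and3P[BA /eqP hBm /eqP hB]] hmin.
have hmin' : forall B' : {set E}, B' \subset A -> r (e |: B') = r B' -> m <= #|B'|.
  move=> B' h1 h2; apply: hmin; apply/existsP; exists B'; by rewrite h1 eqxx h2 eqxx.
have eB : e \notin B by apply: contra eA; apply: (subsetP BA).
have Bind : #|B| <= r B.
  rewrite leqNgt; apply/negP => hlt.
  have [y yB hy] := dep_elem Hr (erefl _) hlt.
  have h1 : B :\ y \subset A by apply: subset_trans (subsetDl _ _) BA.
  have h2 : r (e |: (B :\ y)) = r (B :\ y).
    have := m_addsub Hr (B :\ y) e.
    have : r (e |: (B :\ y)) <= r (e |: B).
      apply: m_mono Hr _ _ _; apply: setUS; exact: subsetDl.
    lia.
  have := hmin' _ h1 h2. have := cardsD1 y B. rewrite yB. lia.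
exists (e |: B); split; last first.
- by apply: setUS.
- by rewrite setU11.
apply/andP; split.
  rewrite /dependent cardsU1 eB hB. have := m_bound Hr B. lia.
apply/forallP => D; apply/implyP => hD.
rewrite /dependent -leqNgt.
have hDs : D \subset e |: B by apply: proper_sub.
have hDc := proper_card hD.
case: (boolP (e \in D)) => eD.
  have hB' : D :\ e \subset B.
    apply/subsetP => z; rewrite !inE => /andP[ze zD].
    by move: (subsetP hDs z zD); rewrite !inE (negbTE ze).
  have hBi := indep_sub Hr Bind hB'.
  have hDe : #|D| = (#|D :\ e|).+1 by rewrite (cardsD1 e D) eD.
  rewrite leqNgt; apply/negP => hlt.
  have hm := m_mono Hr (subsetDl D [set e]).
  have h2 : r (e |: (D :\ e)) = r (D :\ e) by rewrite setD1K //; lia.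
  have := hmin' _ (subset_trans hB' BA) h2.
  move: hDc; rewrite cardsU1 eB. lia.
apply: (indep_sub Hr Bind).
apply/subsetP => z zD; move: (subsetP hDs z zD); rewrite !inE.
case/orP => // /eqP ze; by rewrite -ze zD in eD.
Qed.

Lemma cl_rank E (r : rankfun E) : is_matroid r -> forall (A : {set E}) (s : seq E),
  (forall x, x \in s -> r (x |: A) = r A) -> r (A :|: [set x in s]) = r A.
Proof.
move=> Hr A; elim=> [|a s IH] hs.
  have -> : [set x in [::]] = set0 :> {set E} by apply/setP=> z; rewrite !inE.
  by rewrite setU0.
have IH' := IH (fun x hx => hs x (mem_behead (s:=a::s) hx)).
have ha := hs a (mem_head _ _).
have H := @m_subm _ _ Hr (A :|: [set x in s]) (a |: A) (A :|: [set x in a :: s]) A.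
have hm := m_mono Hr (subsetUl A [set x in a :: s]).
suff [S1 S2] : A :|: [set x in a :: s] \subset (A :|: [set x in s]) :|: (a |: A) /\
   A \subset (A :|: [set x in s]) :&: (a |: A).
  have := H S1 S2. lia.
split.
  apply/subsetP => z; rewrite !inE. by case: (z \in A); case: (z == a); case: (z \in s).
apply/subsetP => z; rewrite !inE => ->. by rewrite orbT.
Qed.

Lemma cyc_flat_cl E (r : rankfun E) : is_matroid r -> forall (A : {set E}) e, e \notin A ->
  r (e |: A) = r A ->
  exists G, [/\ cyclic_flat r G, e \in G & forall x, x \in G -> r (x |: A) = r A].
Proof.
move=> Hr A e eA hA.
pose T := [set x | r (x |: A) == r A].
have AT : A \subset T.
  apply/subsetP => x xA; rewrite inE (setUidPr _) // sub1set //.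
have rT : r T = r A.
  have := @cl_rank _ _ Hr A (enum T).
  rewrite set_enum (setUidPr AT); apply => x; rewrite mem_enum inE; by move/eqP.
have Tcl : forall x, r (x |: T) <= r T -> x \in T.
  move=> x h; rewrite inE; apply/eqP.
  have := m_addsub Hr A x.
  have : r (x |: A) <= r (x |: T) by apply: m_mono Hr _ _ _; apply: setUS.
  lia.
have CT : forall (C : {set E}) x, circuit r C -> x \in C -> C :\ x \subset T -> C \subset T.
  move=> C x hC xC hCT.
  have xT : x \in T by apply: Tcl; rewrite (circuit_cl Hr hC xC hCT).
  rewrite -(setD1K xC); apply/subsetP => z; rewrite in_setU1 => /orP[/eqP->//|zC].
  exact: (subsetP hCT).
pose Cset := [set C | circuit r C && (C \subset T)].
pose G := \bigcup_(C in Cset) C.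
have GT : G \subset T by apply/bigcupsP => C; rewrite inE => /andP[].
have inG : forall (C : {set E}) x, circuit r C -> x \in C -> C \subset T -> x \in G.
  move=> C x hC xC hCT; apply/bigcupP; exists C => //; by rewrite inE hC.
exists G; split.
- split.
  + apply/forallP => x; apply/implyP => xG; rewrite ltnNge; apply/negP => h.
    have h2 : r (x |: G) = r G by have := m_addsub Hr G x; lia.
    have [C [hC xC hCs]] := cl_circuit Hr xG h2.
    have hCx : C :\ x \subset G.
      apply/subsetP => z; rewrite !inE => /andP[zx zC].
      by move: (subsetP hCs z zC); rewrite !inE (negbTE zx).
    move/negP: xG; apply; apply: (inG C) => //.
    apply: CT hC xC _; exact: subset_trans hCx GT.
  + exists Cset; split => //; apply/subsetP => C; rewrite !inE; by case/andP.
- have [C [hC eC hCs]] := cl_circuit Hr eA hA.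
  apply: (inG C) => //; apply: subset_trans hCs _.
  apply/subsetP => z; rewrite !inE => /orP[/eqP->|zA]; first by rewrite hA.
  by move: (subsetP AT z zA); rewrite inE.
- move=> x xG; apply/eqP; by move: (subsetP GT x xG); rewrite inE.
Qed.
Lemma no_bad E (N : rankfun E) rM (F : {set E}) e : is_matroid N -> N setT = rM.+1 ->
  flat N F -> N F = rM -> e \in F -> N (F :\ e) = rM ->
  (forall A : {set E}, A \subset F -> e \notin A -> N A < rM -> N (e |: A) = (N A).+1) ->
  exists N' : rankfun E, [/\ is_matroid N', N' setT = rM.+1,
     (forall X, minn (N' X) rM = minn (N X) rM) & N F < N' F].
Proof.
move=> HN hNT /forallP hF hNF eF hNFe hng.
pose s := fun X : {set E} => [&& e \in X, X \subset F & N (X :\ e) == rM].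
pose N' := [ffun X => N X + s X] : rankfun E.
have N'E : forall X, N' X = N X + s X by move=> X; rewrite ffunE.
have sN : forall X, s X -> N X = rM.
  move=> X /and3P[_ XF /eqP h].
  have := m_mono HN XF; have := m_mono HN (subsetDl X [set e]). lia.
have outside : forall X Y : {set E}, X \subset F -> N X = rM -> X \subset Y -> ~~ (Y \subset F) -> N Y = rM.+1.
  move=> X Y XF hX XY /subsetPn [y yY yF].
  have h1 := implyP (hF y) yF.
  have H := @m_subm _ _ HN F (y |: X) (y |: F) X.
  have S1 : y |: F \subset F :|: (y |: X).
    apply/subsetP => z; rewrite !inE; by case: (z == y); case: (z \in F).
  have S2 : X \subset F :&: (y |: X).
    apply/subsetP => z zX; by rewrite !inE zX (subsetP XF z zX) orbT.
  have := H S1 S2.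
  have : y |: X \subset Y by rewrite subUset sub1set yY XY.
  move/(m_mono HN). have := m_top HN Y. lia.
have N'top : forall X, N' X <= rM.+1.
  move=> X; rewrite N'E; case: (boolP (s X)) => hs.
    by rewrite (sN X hs) /= addn1.
  have := m_top HN X. lia.
have N'mono : forall X Y : {set E}, X \subset Y -> N' X <= N' Y.
  move=> X Y XY; rewrite !N'E.
  have := m_mono HN XY.
  case: (boolP (s X)) => hsX; case: (boolP (s Y)) => hsY; try lia.
  have hX := sN X hsX.
  move: hsX => /and3P[eX XF /eqP hXe].
  case: (boolP (Y \subset F)) => YF.
    move/negP: hsY; case; apply/and3P; split => //.
      exact: (subsetP XY).
    have := m_mono HN (setSD [set e] XY).
    have := m_mono HN (subset_trans (subsetDl Y [set e]) YF). move=> h1 h2; apply/eqP. lia.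
  have := outside X Y XF hX XY YF. lia.
have notS : forall Z : {set E}, Z \subset F -> e \in Z -> ~~ s Z -> N (Z :\ e) < rM /\ N Z = (N (Z :\ e)).+1.
  move=> Z ZF eZ hsZ.
  have h1 : N (Z :\ e) < rM.
    have := m_mono HN (subset_trans (subsetDl Z [set e]) ZF).
    case: (eqVneq (N (Z :\ e)) rM) => h; last lia.
    by move: hsZ; rewrite /s eZ ZF h eqxx.
  split => //.
  have := hng (Z :\ e) (subset_trans (subsetDl Z [set e]) ZF) ltac:(by rewrite !inE eqxx) h1.
  by rewrite setD1K.
exists N'; split.
- split.
  + move=> X; rewrite N'E; case: (boolP (s X)) => hs; last by rewrite addn0; apply: m_bound.
    have := m_bound HN (X :\ e). have := cardsD1 e X.
    move: (hs) => /and3P[-> _ /eqP ->]. rewrite (sN X hs). lia.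
  + exact: N'mono.
  + move=> X Y.
    have hsub := m_sub HN X Y.
    case: (boolP (s (X :&: Y))) => hI.
      have h1 := N'mono _ _ (subsetIl X Y).
      have h2 := N'mono _ _ (subsetIr X Y).
      have h3 := N'top (X :|: Y).
      have h4 : N' (X :&: Y) = rM.+1 by rewrite N'E (sN _ hI) hI addn1.
      lia.
    rewrite !N'E (negbTE hI) addn0.
    case: (boolP (s (X :|: Y))) => hU; last lia.
    case: (boolP (s X)) => hX; first lia.
    case: (boolP (s Y)) => hY; first lia.
    move: (hU) => /and3P[eU UF /eqP hUe].
    have XF : X \subset F by apply: subset_trans UF; apply: subsetUl.
    have YF : Y \subset F by apply: subset_trans UF; apply: subsetUr.
    have hUN := sN _ hU.
    case: (boolP (e \in X)) => eX; case: (boolP (e \in Y)) => eY.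
    * have [hx1 hx2] := notS X XF eX hX.
      have [hy1 hy2] := notS Y YF eY hY.
      have hIF : X :&: Y \subset F by apply: subset_trans XF; apply: subsetIl.
      have eI : e \in X :&: Y by rewrite inE eX eY.
      have hI1 : N ((X :&: Y) :\ e) < rM.
        exact: leq_ltn_trans (m_mono HN (setSD [set e] (subsetIl X Y))) hx1.
      have hI2 := hng _ (subset_trans (subsetDl _ [set e]) hIF) ltac:(by rewrite !inE eqxx) hI1.
      rewrite setD1K // in hI2.
      have H := @m_subm _ _ HN (X :\ e) (Y :\ e) ((X :|: Y) :\ e) ((X :&: Y) :\ e).
      have S1 : (X :|: Y) :\ e \subset (X :\ e) :|: (Y :\ e).
        apply/subsetP => z; rewrite !inE; by case: (z == e); case: (z \in X); case: (z \in Y).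
      have S2 : (X :&: Y) :\ e \subset (X :\ e) :&: (Y :\ e).
        apply/subsetP => z; rewrite !inE; by case: (z == e); case: (z \in X); case: (z \in Y).
      have := H S1 S2. move=> H'; clear -H' hUe hx2 hy2 hI2 hUN. simpl. lia.
    * have [hx1 hx2] := notS X XF eX hX.
      have H := @m_subm _ _ HN (X :\ e) Y ((X :|: Y) :\ e) (X :&: Y).
      have S1 : (X :|: Y) :\ e \subset (X :\ e) :|: Y.
        apply/subsetP => z; rewrite !inE; by case: (z == e); case: (z \in X); case: (z \in Y).
      have S2 : X :&: Y \subset (X :\ e) :&: Y.
        apply/subsetP => z; rewrite !inE; case: (z =P e) => [->|]; first by rewrite (negbTE eY) andbF.
        by case: (z \in X); case: (z \in Y).
      have := H S1 S2. move=> H'; clear -H' hUe hx2 hUN. simpl. lia.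
    * have [hy1 hy2] := notS Y YF eY hY.
      have H := @m_subm _ _ HN X (Y :\ e) ((X :|: Y) :\ e) (X :&: Y).
      have S1 : (X :|: Y) :\ e \subset X :|: (Y :\ e).
        apply/subsetP => z; rewrite !inE; by case: (z == e); case: (z \in X); case: (z \in Y).
      have S2 : X :&: Y \subset X :&: (Y :\ e).
        apply/subsetP => z; rewrite !inE; case: (z =P e) => [->|]; first by rewrite (negbTE eX).
        by case: (z \in X); case: (z \in Y).
      have := H S1 S2. move=> H'; clear -H' hUe hy2 hUN. simpl. lia.
    * by move: eU; rewrite inE (negbTE eX) (negbTE eY).
- rewrite N'E.
  case: (boolP (s setT)) => hs; last by rewrite addn0.
  move: hs => /and3P[_ TF _]. have := m_mono HN TF. lia.
- move=> X; rewrite N'E; case: (boolP (s X)) => hs; last by rewrite addn0.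
  rewrite (sN X hs). lia.
- rewrite N'E.
  have -> : s F by rewrite /s eF subxx hNFe eqxx.
  lia.
Qed.
Lemma good_case E (M N : rankfun E) (F A : {set E}) e : is_matroid M -> is_matroid N ->
  (forall X, M X = minn (N X) (M setT)) -> flat N F -> A \subset F -> e \notin A ->
  N A < M setT -> N (e |: A) = N A ->
  exists G, [/\ cyclic_flat M G, e \in G & G \subset F].
Proof.
move=> HM HN hM /forallP hF AF eA hlt heA.
have h1 : M (e |: A) = M A.
  rewrite (hM (e |: A)) (hM A) heA. done.
have [G [hG eG hGx]] := cyc_flat_cl HM eA h1.
exists G; split => //.
apply/subsetP => x xG.
have hx := hGx x xG.
rewrite (hM (x |: A)) (hM A) in hx.
have hx' : N (x |: A) = N A by move: hx hlt; clear; lia.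
case: (boolP (x \in F)) => // xF.
have h2 := implyP (hF x) xF.
have H := @m_subm _ _ HN F (x |: A) (x |: F) A.
have S1 : x |: F \subset F :|: (x |: A).
  apply/subsetP => z; rewrite !inE; by case: (z == x); case: (z \in F).
have S2 : A \subset F :&: (x |: A).
  apply/subsetP => z zA; by rewrite !inE zA (subsetP AF z zA) orbT.
have := H S1 S2. move: h2 hx'. clear. lia.
Qed.

Lemma stepG E (M N : rankfun E) : is_matroid M -> is_matroid N -> is_truncation M N ->
  (forall N', is_erection M N' -> weak_le N' N) ->
  forall F, cyclic_flat N F -> forall e, e \in F ->
  exists G, [/\ cyclic_flat M G, e \in G & G \subset F].
Proof.
move=> HM HN [hT hM] Hmax F [hF [D [DC hFD]]] e eF.
have : e \in \bigcup_(C in D) C by rewrite -hFD.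
case/bigcupP => C0 C0D eC0.
have hC0 : circuit N C0 by move: (subsetP DC C0 C0D); rewrite inE.
have C0F : C0 \subset F by rewrite hFD; apply: bigcup_sup C0D.
have hNFe : N (F :\ e) = N F.
  have := circuit_cl HN hC0 eC0 (setSD [set e] C0F). by rewrite setD1K.
have hNT := m_top HN F.
have hFD1 : N (e |: (F :\ e)) = N (F :\ e) by rewrite setD1K.
case: (ltngtP (N F) (M setT)) => hc.
- apply: (good_case HM HN hM hF (subsetDl F [set e])) => //.
  + by rewrite !inE eqxx.
  + by rewrite hNFe.
- have hFT : F = setT.
    apply/setP => x; rewrite inE; case: (boolP (x \in F)) => // xF.
    have := implyP ((forallP hF) x) xF; have := m_top HN (x |: F). move: hT hNT hc. clear. lia.
  have eT : e \notin [set: E] :\ e by rewrite !inE eqxx.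
  have h1 : M (e |: ([set: E] :\ e)) = M ([set: E] :\ e).
    rewrite setD1K ?inE //.
    have := hM ([set: E] :\ e).
    have := m_add1 HN ([set: E] :\ e) e. rewrite setD1K ?inE //.
    move: hT; clear; lia.
  have [G [hG eG _]] := cyc_flat_cl HM eT h1.
  exists G; split => //. by rewrite hFT subsetT.
- case: (boolP [exists A : {set E}, [&& A \subset F, e \notin A, N A < M setT & N (e |: A) == N A]]).
    case/existsP => A /and4P[h1 h2 h3 /eqP h4].
    exact: (good_case HM HN hM hF h1 h2 h3 h4).
  move/existsPn => hne.
  have hng : forall A : {set E}, A \subset F -> e \notin A -> N A < M setT -> N (e |: A) = (N A).+1.
    move=> A h1 h2 h3.
    have := hne A; rewrite h1 h2 h3 /= => h4.
    have := m_add1 HN A e; have := m_addsub HN A e.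
    move: h4; case: eqP => //= h5 _. move: h5; clear. lia.
  have [N' [HN' hN'T hmin hlt]] := no_bad HN hT hF hc eF ltac:(by rewrite hNFe hc) hng.
  have : weak_le N' N.
    apply: Hmax; split => //; right; split => //.
    move=> X; by rewrite hmin -hM.
  move/(_ F). move: hlt; clear; lia.
Qed.

Lemma union_from E (M : rankfun E) (Cs : {set {set E}}) (F : {set E}) :
  (forall G, cyclic_flat M G -> union_of Cs G) ->
  (forall e, e \in F -> exists G, [/\ cyclic_flat M G, e \in G & G \subset F]) ->
  union_of Cs F.
Proof.
move=> H1 H2.
exists [set C in Cs | C \subset F]; split.
  apply/subsetP => C; rewrite inE; by case/andP.
apply/setP => x; apply/idP/idP.
- move=> xF; have [G [hG xG GF]] := H2 x xF; have [D [DCs hGD]] := H1 G hG.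
  move: (xG); rewrite hGD => /bigcupP [C CD xC].
  apply/bigcupP; exists C => //.
  rewrite inE (subsetP DCs C CD) /=. apply: subset_trans GF; rewrite hGD; exact: bigcup_sup CD.
- case/bigcupP => C; rewrite inE => /andP[_ CF] xC; exact: (subsetP CF x xC).
Qed.

Lemma circ_pres E (M N : rankfun E) C : is_matroid M -> is_truncation M N ->
  circuit M C -> M C < M setT -> circuit N C /\ N C < N setT.
Proof.
move=> HM [hT hM] /andP[hd /forallP hmin] hlt.
have hC : N C = M C by have := hM C; move: hlt; clear; lia.
split; last by move: hT hC hlt; clear; lia.
apply/andP; split; first by rewrite /dependent hC.
apply/forallP => D; apply/implyP => hD.
have := implyP (hmin D) hD. rewrite /dependent -!leqNgt => hDi.
have := hM D. have := m_mono HM (proper_sub hD). move: hlt hDi. clear. lia.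
Qed.

Theorem lemma3p6 (E : finType) (M N : rankfun E) (Cs : {set {set E}}) :
  is_matroid M ->
  (forall C, C \in Cs -> circuit M C /\ M C < M [set: E]) ->
  (forall F, cyclic_flat M F -> union_of Cs F) ->
  free_elevation M N ->
  forall F, cyclic_flat N F -> union_of Cs F.
Proof.
move=> HM HCs Hcyc Hfe.
elim: Hfe HM HCs Hcyc => {M N} [M0 _ | M0 M1 N0 [[HN1 Her] Hmax] Hne _ IH] HM HCs Hcyc.
  exact: Hcyc.
have Htr : is_truncation M0 M1 by case: Her => // h; rewrite h in Hne.
apply: IH => //.
- move=> C hC; have [h1 h2] := HCs C hC; exact: circ_pres HM Htr h1 h2.
- move=> F hF; apply: union_from Hcyc _.
  exact: stepG HM HN1 Htr Hmax F hF.
Qed.
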